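(* For every $\mathbf y\in\mathbb{R}^3$ and every integer $l\ge0$ there is a vector $Q^l(\mathbf y)=(Q^l_m(\mathbf y))_{m=-l}^{l}\in\mathbb{C}^{2l+1}$ of Euclidean norm $1$ such that, for every $\mathbf x\in\mathbb{R}^3$ with spherical coordinates $(R,\theta,\phi)$ and $R>r:=\|\mathbf y\|$, $$\log\|\mathbf x-\mathbf y\|=\log R-\sum_{n=1}^\infty\frac{a_n}{R^n}\sum_{l=0}^nL_{nl}\sqrt{\frac{4\pi}{2l+1}}\sum_{m=-l}^{l}Q^l_m(\mathbf y)\,Y_l^m(\theta,\phi),\qquad a_n=\frac{r^n}{n}.$$
   Context: Spherical coordinates $(R,\theta,\phi)$ are centered at the origin, with $\theta\in[0,\pi]$ the polar angle and $\phi\in[0,2\pi)$. The spherical harmonics are $Y_l^m(\theta,\phi)=\sqrt{\frac{2l+1}{4\pi}\frac{(l-|m|)!}{(l+|m|)!}}\,P_l^{|m|}(\cos\theta)e^{im\phi}$ for $l\ge0$, $-l\le m\le l$, where $P_n^m(x)=(-1)^m(1-x^2)^{m/2}\frac{d^m}{dx^m}P_n(x)$ and $P_n$ is the Legendre polynomial of degree $n$. With $\Lambda(z)=\frac{\Gamma(z+1/2)}{\Gamma(z+1)}$, the coefficients $L_{nl}$ ($0\le l\le n$) are $L_{nl}=1$ if $n=l=0$; $L_{nl}=\frac{\sqrt\pi}{2\Lambda(n)}$ if $n=l>0$; $L_{nl}=\frac{-n(l+1/2)}{(n+l+1)(n-l)}\Lambda\!\left(\frac{n-l-2}{2}\right)\Lambda\!\left(\frac{n+l-1}{2}\right)$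 if $n>l$ and $n+l$ is even; $L_{nl}=0$ otherwise. (These are the coefficients of the Chebyshev polynomial $T_n$ in the Legendre basis: $T_n=\sum_{l=0}^nL_{nl}P_l$.) *)

(* Defs.v *)
From Stdlib Require Import Reals ZArith.
From Coquelicot Require Import Coquelicot.
Open Scope R_scope.

(* Legendre polynomials, Bonnet recurrence:
   P_0 = 1, P_1 = x, (n+2) P_{n+2} = (2n+3) x P_{n+1} - (n+1) P_n. *)
Fixpoint legendre_pair (n : nat) (x : R) : R * R :=
  match n with
  | O => (1, x)
  | S k => let (p, q) := legendre_pair k x in
           (q, ((2 * INR k + 3) * x * q - (INR k + 1) * p) / (INR k + 2))
  end.
Definition Legendre (n : nat) (x : R) : R := fst (legendre_pair n x).

Definition assocLegendre (n m : nat) (x : R) : R :=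
  (-1) ^ m * (sqrt (1 - x ^ 2)) ^ m * Derive_n (Legendre n) m x.

Definition Ylm (l : nat) (m : Z) (theta phi : R) : C :=
  let am := Z.abs_nat m in
  Cmult (RtoC (sqrt ((2 * INR l + 1) / (4 * PI) * (INR (fact (l - am)) / INR (fact (l + am))))
               * assocLegendre l am (cos theta)))
        (cos (IZR m * phi), sin (IZR m * phi)).

(* Gamma at positive half-integers: GammaHalf j = Gamma(j/2) for j >= 1,
   via Gamma(1/2) = sqrt pi, Gamma(1) = 1, Gamma(z+1) = z Gamma(z). *)
Fixpoint GammaHalf (j : nat) : R :=
  match j with
  | O => 0 (* unused: Gamma has a pole at 0 *)
  | 1%nat => sqrt PI
  | 2%nat => 1
  | S (S k as j') => (INR k / 2) * GammaHalf k
  end.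

(* LambdaHalf j = Lambda(j/2) = Gamma(j/2 + 1/2) / Gamma(j/2 + 1). *)
Definition LambdaHalf (j : nat) : R := GammaHalf (S j) / GammaHalf (S (S j)).

(* Coefficients L_{nl} of T_n in the Legendre basis. *)
Definition Lcoef (n l : nat) : R :=
  if (Nat.eqb n 0 && Nat.eqb l 0)%bool then 1
  else if Nat.eqb n l then sqrt PI / (2 * LambdaHalf (2 * n))
  else if (Nat.ltb l n && Nat.even (n + l))%bool then
    (- INR n * (INR l + / 2)) / ((INR n + INR l + 1) * (INR n - INR l))
    * LambdaHalf (n - l - 2) * LambdaHalf (n + l - 1)
  else 0.

Definition sph (Rr theta phi : R) : R * R * R :=
  (Rr * sin theta * cos phi, Rr * sin theta * sin phi, Rr * cos theta).

Definition norm3 (v : R * R * R) : R :=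
  let '(a, b, c) := v in sqrt (a ^ 2 + b ^ 2 + c ^ 2).

Definition sub3 (v w : R * R * R) : R * R * R :=
  let '(a, b, c) := v in let '(d, e, f) := w in (a - d, b - e, c - f).

Definition sum_m (l : nat) (f : Z -> C) : C :=
  sum_n (fun k : nat => f (Z.of_nat k - Z.of_nat l)%Z) (2 * l).

(* Main.v *)
Require Import Defs.
From Stdlib Require Import Reals ZArith Lra Lia.
From Coquelicot Require Import Coquelicot.
Open Scope R_scope.

Lemma nat_ind2 (P : nat -> Prop) : P 0%nat -> P 1%nat ->
  (forall k, P k -> P (S k) -> P (S (S k))) -> forall n, P n.
Proof.
  intros H0 H1 HS n. assert (P n /\ P (S n)). { induction n as [|n [A B]]; auto. }
  tauto.
Qed.

Fixpoint DLp (l : nat) : (nat -> R -> R) * (nat -> R -> R) :=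
 match l with
 | O => (fun m x => match m with O => 1 | _ => 0 end,
         fun m x => match m with O => x | 1%nat => 1 | _ => 0 end)
 | S k => let (p,q) := DLp k in
    (q, fun m x => ((2*INR k+3)*(x*q m x + INR m * q (pred m) x) - (INR k+1)*p m x)/(INR k+2))
 end.
Definition DL l := fst (DLp l).

Lemma DL_SS k m x : DL (S (S k)) m x =
  ((2*INR k+3)*(x*DL (S k) m x + INR m * DL (S k) (pred m) x) - (INR k+1)*DL k m x)/(INR k+2).
Proof. unfold DL. simpl. destruct (DLp k) as [p q]. simpl. reflexivity. Qed.

Lemma DL_0 m x : DL 0 m x = match m with O => 1 | _ => 0 end.
Proof. reflexivity. Qed.
Lemma DL_1 m x : DL 1 m x = match m with O => x | 1%nat => 1 | _ => 0 end.
Proof. reflexivity. Qed.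

Lemma Legendre_SS k x : Legendre (S (S k)) x =
  ((2*INR k+3)*x*Legendre (S k) x - (INR k+1)*Legendre k x)/(INR k+2).
Proof. unfold Legendre. simpl. destruct (legendre_pair k x) as [p q]. simpl. reflexivity. Qed.

Lemma DL_Legendre l x : DL l 0 x = Legendre l x.
Proof.
  revert l. apply nat_ind2; [reflexivity|reflexivity|].
  intros k H1 H2. rewrite DL_SS, Legendre_SS, H1, H2. simpl. field.
  pose proof (pos_INR k). lra.
Qed.

Lemma is_derive_combo (f g h : R->R) f' g' h' A c B C x :
  is_derive f x f' -> is_derive g x g' -> is_derive h x h' -> C <> 0 ->
  is_derive (fun t => (A*(t*f t + c*g t) - B*h t)/C) x ((A*(f x + x*f' + c*g') - B*h')/C).
Proof.
  intros Hf Hg Hh HC.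
  pose proof (is_derive_unique _ _ _ Hf).
  pose proof (is_derive_unique _ _ _ Hg).
  pose proof (is_derive_unique _ _ _ Hh).
  auto_derive.
  - repeat split; try (eexists; eassumption); auto.
  - replace (Derive (fun x => f x) x) with f' by (symmetry; exact H).
    replace (Derive (fun x => g x) x) with g' by (symmetry; exact H0).
    replace (Derive (fun x => h x) x) with h' by (symmetry; exact H1).
    field. auto.
Qed.

Lemma isd_const (a x : R) : is_derive (fun _ => a) x 0.
Proof. exact (is_derive_const a x). Qed.
Lemma isd_id (x : R) : is_derive (fun t => t) x 1.
Proof. exact (is_derive_id x). Qed.

Lemma DL_deriv l : forall m x, is_derive (DL l m) x (DL l (S m) x).
Proof.
  induction l as [| |l IH1 IH2] using nat_ind2; intros m x.
  - destruct m; unfold DL; simpl; apply isd_const.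
  - destruct m as [|[|m]]; unfold DL; simpl.
    + apply isd_id.
    + apply isd_const.
    + apply isd_const.
  - pose proof (pos_INR l).
    apply is_derive_ext with (f := fun x => ((2*INR l+3)*(x*DL (S l) m x + INR m * DL (S l) (pred m) x) - (INR l+1)*DL l m x)/(INR l+2)).
    { intros t. now rewrite DL_SS. }
    rewrite DL_SS.
    assert (E : INR (S m) * DL (S l) (Init.Nat.pred (S m)) x = DL (S l) m x + INR m * DL (S l) (S (pred m)) x).
    { destruct m. simpl. ring. rewrite S_INR. simpl pred. ring. }
    rewrite E.
    replace ((2 * INR l + 3) * (x * DL (S l) (S m) x + (DL (S l) m x + INR m * DL (S l) (S (pred m)) x)))
      with ((2 * INR l + 3) * (DL (S l) m x + x * DL (S l) (S m) x + INR m * DL (S l) (S (pred m)) x)) by ring.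
    apply is_derive_combo; auto. lra.
Qed.

Lemma Derive_n_Legendre l m x : Derive_n (Legendre l) m x = DL l m x.
Proof.
  revert x. induction m; intros x.
  - simpl. symmetry. apply DL_Legendre.
  - simpl. rewrite (Derive_ext _ (DL l m) x IHm). apply is_derive_unique. apply DL_deriv.
Qed.

Lemma DL_high l : forall m, (l < m)%nat -> forall x, DL l m x = 0.
Proof.
  induction l as [| |l IH1 IH2] using nat_ind2; intros m Hm x.
  - destruct m; [lia|reflexivity].
  - destruct m as [|[|m]]; [lia|lia|reflexivity].
  - rewrite DL_SS, IH1, IH2, IH2 by lia. field. pose proof (pos_INR l); lra.
Qed.

Lemma is_derive_combo2 (f g h : R->R) f' g' h' c x :
  is_derive f x f' -> is_derive g x g' -> is_derive h x h' ->
  is_derive (fun t => f t - t*g t + c*h t) x (f' - (g x + x*g') + c*h').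
Proof.
  intros Hf Hg Hh.
  pose proof (is_derive_unique _ _ _ Hf).
  pose proof (is_derive_unique _ _ _ Hg).
  pose proof (is_derive_unique _ _ _ Hh).
  auto_derive.
  - repeat split; try (eexists; eassumption); auto.
  - replace (Derive (fun x => f x) x) with f' by (symmetry; exact H).
    replace (Derive (fun x => g x) x) with g' by (symmetry; exact H0).
    replace (Derive (fun x => h x) x) with h' by (symmetry; exact H1).
    ring.
Qed.

Lemma lift0 (F F' : R -> R) : (forall x, F x = 0) -> (forall x, is_derive F x (F' x)) ->
  forall x, F' x = 0.
Proof.
  intros H0 HD x. rewrite <- (is_derive_unique _ _ _ (HD x)).
  rewrite (Derive_ext F (fun _ => 0) x H0). apply is_derive_unique. apply isd_const.
Qed.

Lemma DL_BC0 l : forall x,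
  DL (S l) 1 x = x * DL l 1 x + (INR l + 1) * DL l 0 x /\
  DL l 1 x = x * DL (S l) 1 x - (INR l + 1) * DL (S l) 0 x.
Proof.
  induction l; intros x.
  - rewrite !DL_1, !DL_0. simpl. split; ring.
  - destruct (IHl x) as [HB HC]. pose proof (pos_INR l) as Hl.
    assert (B1 : DL (S (S l)) 1 x = x * DL (S l) 1 x + (INR (S l) + 1) * DL (S l) 0 x).
    { rewrite DL_SS. simpl pred. rewrite HC. rewrite !S_INR. change (INR 0) with 0. field. lra. }
    split; [exact B1|].
    rewrite B1. rewrite DL_SS. simpl pred. rewrite S_INR.
    change (INR 0) with 0.
    rewrite HB at 1. rewrite HC at 1. field. lra.
Qed.

Lemma DL_B l m x : DL (S l) (S m) x = x * DL l (S m) x + (INR l + INR m + 1) * DL l m x.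
Proof.
  revert x. induction m; intros x.
  - destruct (DL_BC0 l x) as [H _]. rewrite H. simpl. ring.
  - pose proof (lift0 (fun t => DL (S l) (S m) t - t * DL l (S m) t + (-(INR l + INR m + 1)) * DL l m t)
      (fun t => DL (S l) (S (S m)) t - (DL l (S m) t + t * DL l (S (S m)) t) + (-(INR l + INR m + 1)) * DL l (S m) t)) as H.
    assert (H2 := H (fun t => ltac:(cbv beta; rewrite IHm; ring))
      (fun t => is_derive_combo2 (DL (S l) (S m)) (DL l (S m)) (DL l m) _ _ _ _ t (DL_deriv _ _ _) (DL_deriv _ _ _) (DL_deriv _ _ _)) x).
    rewrite S_INR. simpl in H2. lra.
Qed.

Lemma DL_C l m x : DL l (S m) x = x * DL (S l) (S m) x - (INR l + 1 - INR m) * DL (S l) m x.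
Proof.
  revert x. induction m; intros x.
  - destruct (DL_BC0 l x) as [_ H]. rewrite H. simpl. ring.
  - pose proof (lift0 (fun t => DL l (S m) t - t * DL (S l) (S m) t + (INR l + 1 - INR m) * DL (S l) m t)
      (fun t => DL l (S (S m)) t - (DL (S l) (S m) t + t * DL (S l) (S (S m)) t) + (INR l + 1 - INR m) * DL (S l) (S m) t)) as H.
    assert (H2 := H (fun t => ltac:(cbv beta; rewrite IHm; ring))
      (fun t => is_derive_combo2 (DL l (S m)) (DL (S l) (S m)) (DL (S l) m) _ _ _ _ t (DL_deriv _ _ _) (DL_deriv _ _ _) (DL_deriv _ _ _)) x).
    rewrite S_INR. simpl in H2. lra.
Qed.

Lemma DL_D l m x : (1 - x^2) * DL l (S (S m)) x = 2 * INR (S m) * x * DL l (S m) x - (INR l - INR m) * (INR l + INR m + 1) * DL l m x.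
Proof.
  destruct l.
  - rewrite !DL_0. destruct m; simpl; ring.
  -
    pose proof (DL_C l (S m) x) as C1.
    pose proof (DL_B l (S m) x) as B1.
    pose proof (DL_C l m x) as C0.
    rewrite C1, C0 in B1. rewrite !S_INR in *. nra.
Qed.


Definition cf (l m : nat) : R := INR (fact (l - m)) / INR (fact (l + m)).

Lemma INR_fact_pos n : 0 < INR (fact n).
Proof. apply lt_0_INR. apply lt_O_fact. Qed.

Lemma cf_pos l m : 0 < cf l m.
Proof. unfold cf. apply Rdiv_lt_0_compat; apply INR_fact_pos. Qed.

Lemma cf_succ_l l m : (m <= l)%nat -> cf (S l) m = cf l m * (INR l + 1 - INR m) / (INR l + 1 + INR m).
Proof.
  intros H. unfold cf.
  replace (S l - m)%nat with (S (l - m)) by lia.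
  replace (S l + m)%nat with (S (l + m)) by lia.
  rewrite !fact_simpl, !mult_INR, !S_INR, minus_INR, plus_INR by lia.
  pose proof (INR_fact_pos (l-m)). pose proof (INR_fact_pos (l+m)). pose proof (pos_INR l). pose proof (pos_INR m).
  field. lra.
Qed.

Lemma cf_succ_m l m : (m < l)%nat -> cf l (S m) = cf l m / ((INR l - INR m) * (INR l + INR m + 1)).
Proof.
  intros H. unfold cf.
  replace (l - m)%nat with (S (l - S m)) by lia.
  replace (l + S m)%nat with (S (l + m)) by lia.
  rewrite !fact_simpl, !mult_INR, !S_INR, !minus_INR, plus_INR by lia.
  rewrite S_INR.
  pose proof (INR_fact_pos (l-S m)). pose proof (INR_fact_pos (l+m)). pose proof (pos_INR l). pose proof (pos_INR m).
  apply lt_INR in H.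
  field. split; lra.
Qed.

Lemma cf_diag l : cf (S l) (S l) = cf l l / ((2 * INR l + 1) * (2 * INR l + 2)).
Proof.
  unfold cf. replace (S l - S l)%nat with 0%nat by lia. replace (l - l)%nat with 0%nat by lia.
  replace (S l + S l)%nat with (S (S (l + l))) by lia.
  rewrite !fact_simpl, !mult_INR, !S_INR, plus_INR.
  pose proof (INR_fact_pos (l+l)). pose proof (pos_INR l). simpl. field. lra.
Qed.

Lemma cf_pred_l l m : (m <= l)%nat -> cf l m = cf (S l) m * (INR l + 1 + INR m) / (INR l + 1 - INR m).
Proof.
  intros H. rewrite cf_succ_l by exact H. apply le_INR in H. pose proof (pos_INR m).
  field. lra.
Qed.

Definition ttm a b s l m := cf l m * s^m * DL l m a * DL l m b.

Lemma s_tt2 a b s l M : s^2 = (1-a^2)*(1-b^2) ->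
  s * ttm a b s l (S (S M)) = cf l (S (S M)) * s^(S M) * ((1-a^2) * DL l (S (S M)) a) * ((1-b^2) * DL l (S (S M)) b).
Proof.
  intros Hs. unfold ttm.
  replace (s * (cf l (S (S M)) * s ^ S (S M) * DL l (S (S M)) a * DL l (S (S M)) b))
    with (cf l (S (S M)) * s ^ S M * (s^2) * DL l (S (S M)) a * DL l (S (S M)) b) by (simpl; ring).
  rewrite Hs. ring.
Qed.

Lemma permid_gen a b s L M : s^2 = (1-a^2)*(1-b^2) -> (S M <= L)%nat ->
  (INR L + 2) * ttm a b s (S (S L)) (S M) - (2*INR L + 3)*a*b*ttm a b s (S L) (S M) + (INR L + 1) * ttm a b s L (S M)
  = (2*INR L+3) / 2 * (s * ttm a b s (S L) M + s * ttm a b s (S L) (S (S M))).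
Proof.
  intros Hs HML.
  rewrite s_tt2 by exact Hs.
  rewrite (DL_D (S L) M a), (DL_D (S L) M b).
  unfold ttm.
  rewrite (DL_B (S L) M a), (DL_B (S L) M b), (DL_C L M a), (DL_C L M b).
  rewrite (cf_pred_l L (S M)) by lia.
  rewrite (cf_succ_l (S L) (S M)) by lia.
  rewrite (cf_succ_m (S L) (S M)) by lia.
  rewrite (cf_succ_m (S L) M) by lia.
  assert (HM : INR (S M) <= INR L) by (apply le_INR; exact HML).
  rewrite !S_INR in *. pose proof (pos_INR M).
  simpl pow.
  field. lra.
Qed.

Lemma cf_0 l : cf l 0 = 1.
Proof. unfold cf. rewrite Nat.sub_0_r, Nat.add_0_r. field. pose proof (INR_fact_pos l). lra. Qed.

Lemma s_tt1 a b s l : s^2 = (1-a^2)*(1-b^2) ->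
  s * ttm a b s l 1 = cf l 1 * ((1-a^2) * DL l 1 a) * ((1-b^2) * DL l 1 b).
Proof.
  intros Hs. unfold ttm.
  replace (s * (cf l 1 * s ^ 1 * DL l 1 a * DL l 1 b)) with (cf l 1 * s^2 * DL l 1 a * DL l 1 b) by ring.
  rewrite Hs. ring.
Qed.

Lemma DL_Z L x : (1 - x^2) * DL (S L) 1 x = (INR L + 1) * (DL L 0 x - x * DL (S L) 0 x).
Proof.
  pose proof (DL_B L 0 x) as B. pose proof (DL_C L 0 x) as C. rewrite C in B. simpl in B.
  simpl. nra.
Qed.

Lemma permid_0 a b s L : s^2 = (1-a^2)*(1-b^2) ->
  (INR L + 2) * ttm a b s (S (S L)) 0 - (2*INR L + 3)*a*b*ttm a b s (S L) 0 + (INR L + 1) * ttm a b s L 0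
  = (2*INR L+3) / 2 * (2 * (s * ttm a b s (S L) 1)).
Proof.
  intros Hs. rewrite s_tt1 by exact Hs. rewrite !DL_Z.
  unfold ttm. rewrite !DL_SS. rewrite (cf_succ_m (S L) 0) by lia. rewrite !cf_0.
  rewrite !S_INR. simpl pow. change (INR 0) with 0. pose proof (pos_INR L).
  field. lra.
Qed.

Lemma DL_top l x : DL (S l) l x = x * DL (S l) (S l) x.
Proof.
  pose proof (DL_D (S l) l x) as H. rewrite (DL_high (S l) (S (S l))) in H by lia.
  rewrite !S_INR in H. pose proof (pos_INR l). nra.
Qed.

Lemma permid_l a b s L :
  (INR L + 2) * ttm a b s (S (S L)) (S L) - (2*INR L + 3)*a*b*ttm a b s (S L) (S L) + (INR L + 1) * ttm a b s L (S L)
  = (2*INR L+3) / 2 * (s * ttm a b s (S L) L + s * ttm a b s (S L) (S (S L))).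
Proof.
  unfold ttm. rewrite (DL_high L (S L)) by lia. rewrite (DL_high (S L) (S (S L))) by lia.
  rewrite (DL_B (S L) L a), (DL_B (S L) L b). rewrite !DL_top.
  rewrite (cf_succ_l (S L) (S L)) by lia. rewrite (cf_succ_m (S L) L) by lia.
  rewrite !S_INR. simpl pow. pose proof (pos_INR L).
  field. lra.
Qed.

Lemma permid_l1 a b s L :
  (INR L + 2) * ttm a b s (S (S L)) (S (S L)) - (2*INR L + 3)*a*b*ttm a b s (S L) (S (S L)) + (INR L + 1) * ttm a b s L (S (S L))
  = (2*INR L+3) / 2 * (s * ttm a b s (S L) (S L) + s * ttm a b s (S L) (S (S (S L)))).
Proof.
  unfold ttm. rewrite (DL_high L (S (S L))) by lia. rewrite !(DL_high (S L) (S (S L))) by lia.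
  rewrite !(DL_high (S L) (S (S (S L)))) by lia.
  rewrite (DL_B (S L) (S L) a), (DL_B (S L) (S L) b). rewrite !(DL_high (S L) (S (S L))) by lia.
  rewrite cf_diag.
  rewrite !S_INR. simpl pow. pose proof (pos_INR L).
  field. lra.
Qed.

Lemma permid_hi a b s L m : (S (S L) < m)%nat ->
  (INR L + 2) * ttm a b s (S (S L)) m - (2*INR L + 3)*a*b*ttm a b s (S L) m + (INR L + 1) * ttm a b s L m
  = (2*INR L+3) / 2 * (s * ttm a b s (S L) (pred m) + s * ttm a b s (S L) (S m)).
Proof.
  intros H. unfold ttm. rewrite !(DL_high _ m) by lia. rewrite !(DL_high _ (S m)) by lia.
  rewrite !(DL_high _ (pred m)) by lia. ring.
Qed.

Definition Gm a b s l m := match m with O => 2 * (s * ttm a b s l 1) | S M => s * ttm a b s l M + s * ttm a b s l (S (S M)) end.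

Lemma permid a b s L m : s^2 = (1-a^2)*(1-b^2) ->
  (INR L + 2) * ttm a b s (S (S L)) m - (2*INR L + 3)*a*b*ttm a b s (S L) m + (INR L + 1) * ttm a b s L m
  = (2*INR L+3) / 2 * Gm a b s (S L) m.
Proof.
  intros Hs. destruct m as [|M].
  - apply permid_0; auto.
  - unfold Gm. destruct (le_lt_dec (S M) L) as [H|H].
    + apply permid_gen; auto.
    + destruct (Nat.eq_dec M L) as [->|H2]. apply permid_l.
      destruct (Nat.eq_dec M (S L)) as [->|H3]. apply permid_l1.
      apply (permid_hi a b s L (S M)). lia.
Qed.

Definition eps (m : nat) : R := match m with O => 1 | _ => 2 end.
Definition Wt a b s psi l N : R := sum_n (fun m => eps m * ttm a b s l m * cos (INR m * psi)) N.

Lemma sum_Sn_R (f : nat -> R) n : sum_n f (S n) = sum_n f n + f (S n).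
Proof. rewrite sum_Sn. reflexivity. Qed.
Lemma sum_O_R (f : nat -> R) : sum_n f 0 = f 0%nat.
Proof. rewrite sum_O. reflexivity. Qed.

Lemma cos_rec N psi : 2 * cos psi * cos (INR (S N) * psi) = cos (INR (S (S N)) * psi) + cos (INR N * psi).
Proof.
  replace (INR (S (S N)) * psi) with (INR (S N) * psi + psi) by (rewrite (S_INR (S N)); ring).
  replace (INR N * psi) with (INR (S N) * psi - psi) by (rewrite (S_INR N); ring).
  rewrite cos_plus, cos_minus. ring.
Qed.

Lemma W_rec_gen a b s psi L N : s^2 = (1-a^2)*(1-b^2) ->
  (INR L + 2) * Wt a b s psi (S (S L)) N - (2*INR L + 3)*a*b*Wt a b s psi (S L) N + (INR L + 1) * Wt a b s psi L N
  - (2*INR L+3) * s * cos psi * Wt a b s psi (S L) N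
  = (2*INR L+3) * (s * ttm a b s (S L) (S N) * cos (INR N * psi) - s * ttm a b s (S L) N * cos (INR (S N) * psi)).
Proof.
  intros Hs. unfold Wt. induction N.
  - rewrite !sum_O_R. pose proof (permid a b s L 0 Hs) as H. unfold Gm in H.
    simpl eps. change (INR 0) with 0. rewrite Rmult_0_l, cos_0. change (INR 1) with 1.
    replace (1 * psi) with psi by ring. lra.
  - rewrite !sum_Sn_R. pose proof (permid a b s L (S N) Hs) as H. unfold Gm in H.
    simpl eps.
    pose proof (cos_rec N psi) as Hc.
    set (cN := cos (INR N * psi)) in *. set (c1 := cos (INR (S N) * psi)) in *. set (c2 := cos (INR (S (S N)) * psi)) in *.
    apply (f_equal (fun z => 2 * c1 * z)) in H.
    apply (f_equal (fun z => (2*INR L+3) * s * ttm a b s (S L) (S N) * z)) in Hc.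
    lra.
Qed.

Lemma tt_high a b s l m : (l < m)%nat -> ttm a b s l m = 0.
Proof. intros H. unfold ttm. rewrite (DL_high l m H a). ring. Qed.

Lemma Wt_ext a b s psi l N : (l <= N)%nat -> Wt a b s psi l N = Wt a b s psi l l.
Proof.
  intros H. induction H as [|N H IH]; [reflexivity|]. unfold Wt in *. rewrite sum_Sn_R, IH. rewrite tt_high by lia. ring.
Qed.

Lemma Legendre_0 x : Legendre 0 x = 1.
Proof. reflexivity. Qed.
Lemma Legendre_1 x : Legendre 1 x = x.
Proof. reflexivity. Qed.

Lemma addition_real a b s psi l : s^2 = (1-a^2)*(1-b^2) ->
  Wt a b s psi l l = Legendre l (a*b + s*cos psi).
Proof.
  intros Hs. revert l. apply nat_ind2; cbv beta.
  - unfold Wt. rewrite sum_O_R. unfold ttm. rewrite cf_0. rewrite Legendre_0. simpl. rewrite Rmult_0_l, cos_0. unfold DL. simpl. ring.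
  - unfold Wt. rewrite sum_Sn_R, sum_O_R. unfold ttm. rewrite cf_0. rewrite Legendre_1.
    unfold cf. simpl. rewrite Rmult_0_l, cos_0, Rmult_1_l. unfold DL; simpl. replace (1 * psi) with psi by ring. field.
  - intros L H0 H1. pose proof (W_rec_gen a b s psi L (S (S L)) Hs) as H.
    rewrite !tt_high in H by lia.
    rewrite (Wt_ext a b s psi (S L) (S (S L))) in H by lia.
    rewrite (Wt_ext a b s psi L (S (S L))) in H by lia.
    rewrite H0, H1 in H. rewrite Legendre_SS. pose proof (pos_INR L).
    apply (Rmult_eq_reg_l (INR L + 2)); [|lra].
    field_simplify; [|lra]. lra.
Qed.

Lemma GH_SS j : (1 <= j)%nat -> GammaHalf (S (S j)) = INR j / 2 * GammaHalf j.
Proof. intros H. destruct j as [|j]; [lia|]. reflexivity. Qed.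

Lemma GH_pos j : (1 <= j)%nat -> 0 < GammaHalf j.
Proof.
  intros H. assert (forall j, 0 < GammaHalf (S j) /\ 0 < GammaHalf (S (S j))).
  { induction j0 as [|j0 [A B]].
    - split; simpl. apply sqrt_lt_R0. apply PI_RGT_0. lra.
    - split; [exact B|]. rewrite GH_SS by lia. apply Rmult_lt_0_compat; [|exact A].
      apply Rdiv_lt_0_compat; [|lra]. apply lt_0_INR; lia. }
  destruct j; [lia|]. apply H0.
Qed.

Definition LH := LambdaHalf.
Lemma LH_pos j : 0 < LambdaHalf j.
Proof. unfold LambdaHalf. apply Rdiv_lt_0_compat; apply GH_pos; lia. Qed.

Lemma LH_SS j : LambdaHalf (S (S j)) = LambdaHalf j * (INR j + 1) / (INR j + 2).
Proof.
  unfold LambdaHalf. rewrite (GH_SS (S j)), (GH_SS (S (S j))) by lia.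
  pose proof (GH_pos (S j) ltac:(lia)). pose proof (GH_pos (S (S j)) ltac:(lia)). rewrite !S_INR. pose proof (pos_INR j).
  field. repeat split; lra.
Qed.

Lemma LH_prod j : LambdaHalf j * LambdaHalf (S j) = 2 / (INR j + 1).
Proof.
  unfold LambdaHalf. rewrite (GH_SS (S j)) by lia.
  pose proof (GH_pos (S j) ltac:(lia)). pose proof (GH_pos (S (S j)) ltac:(lia)). rewrite !S_INR. pose proof (pos_INR j).
  field. repeat split; lra.
Qed.

Lemma LH_0 : LambdaHalf 0 = sqrt PI.
Proof. unfold LambdaHalf. simpl. field. Qed.

Lemma Lc_00 : Lcoef 0 0 = 1.
Proof. reflexivity. Qed.

Lemma Lc_diag n : Lcoef (S n) (S n) = sqrt PI / (2 * LambdaHalf (2 * S n)).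
Proof. unfold Lcoef. simpl. rewrite Nat.eqb_refl. reflexivity. Qed.

Lemma Lc_gen n l : (l < n)%nat -> Nat.even (n + l) = true ->
  Lcoef n l = (- INR n * (INR l + / 2)) / ((INR n + INR l + 1) * (INR n - INR l))
    * LambdaHalf (n - l - 2) * LambdaHalf (n + l - 1).
Proof.
  intros H1 H2. unfold Lcoef.
  destruct (Nat.eqb n 0) eqn:E1. apply Nat.eqb_eq in E1; lia. simpl.
  destruct (Nat.eqb n l) eqn:E2. apply Nat.eqb_eq in E2; lia.
  destruct (Nat.ltb l n) eqn:E3; [|apply Nat.ltb_ge in E3; lia].
  rewrite H2. reflexivity.
Qed.

Lemma Lc_odd n l : Nat.even (n + l) = false -> Lcoef n l = 0.
Proof.
  intros H. unfold Lcoef.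
  destruct (Nat.eqb n 0 && Nat.eqb l 0)%bool eqn:E1.
  { apply andb_prop in E1. destruct E1 as [A B]. apply Nat.eqb_eq in A, B. subst. discriminate. }
  destruct (Nat.eqb n l) eqn:E2.
  { apply Nat.eqb_eq in E2. subst. replace (l+l)%nat with (2*l)%nat in H by lia. rewrite Nat.even_mul in H. discriminate. }
  rewrite H. rewrite Bool.andb_false_r. reflexivity.
Qed.

Lemma Lc_high n l : (n < l)%nat -> Lcoef n l = 0.
Proof.
  intros H. unfold Lcoef.
  destruct (Nat.eqb n 0 && Nat.eqb l 0)%bool eqn:E1.
  { apply andb_prop in E1. destruct E1 as [A B]. apply Nat.eqb_eq in A, B. lia. }
  destruct (Nat.eqb n l) eqn:E2. { apply Nat.eqb_eq in E2. lia. }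
  destruct (Nat.ltb l n) eqn:E3. { apply Nat.ltb_lt in E3. lia. }
  reflexivity.
Qed.

Lemma even_shift a c : Nat.even (a + 2*c) = Nat.even a.
Proof. rewrite Nat.even_add, Nat.even_mul. simpl. destruct (Nat.even a); reflexivity. Qed.

Lemma even_2 a : Nat.even (S (S a)) = Nat.even a.
Proof. reflexivity. Qed.

Lemma sqrtPI_pos : 0 < sqrt PI.
Proof. apply sqrt_lt_R0, PI_RGT_0. Qed.

Ltac evn Hp := first [ exact Hp |
  match type of Hp with Nat.even ?o = _ => match goal with |- Nat.even ?e = _ =>
    let c := fresh "c" in
    first [ replace e with (o + 2*0)%nat by lia | replace e with (o + 2*1)%nat by lia
          | replace e with (o + 2*2)%nat by lia | replace e with (o + 2*3)%nat by lia ];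
    rewrite even_shift; exact Hp end end ].

Lemma Lrec_gen p K : Nat.even p = true ->
  let N := (p + K + 3)%nat in let k := S K in
  Lcoef (S (S N)) k = 2*INR k/(2*INR k - 1) * Lcoef (S N) (pred k) + 2*(INR k+1)/(2*INR k+3) * Lcoef (S N) (S k) - Lcoef N k.
Proof.
  intros Hp N k. subst N k. simpl pred.
  assert (Hq : Nat.even (p + 2*K) = true) by (rewrite even_shift; exact Hp).
  rewrite (Lc_gen (S (S (p+K+3))) (S K)) by (lia || evn Hq).
  rewrite (Lc_gen (S (p+K+3)) K) by (lia || evn Hq).
  rewrite (Lc_gen (S (p+K+3)) (S (S K))) by (lia || evn Hq).
  rewrite (Lc_gen (p+K+3) (S K)) by (lia || evn Hq).
  replace (S (S (p + K + 3)) - S K - 2)%nat with (S (S p)) by lia.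
  replace (S (S (p + K + 3)) + S K - 1)%nat with (S (S (p + 2*K + 3))) by lia.
  replace (S (p + K + 3) - K - 2)%nat with (S (S p)) by lia.
  replace (S (p + K + 3) + K - 1)%nat with (p + 2*K + 3)%nat by lia.
  replace (S (p + K + 3) - S (S K) - 2)%nat with p by lia.
  replace (S (p + K + 3) + S (S K) - 1)%nat with (S (S (p + 2*K + 3))) by lia.
  replace (p + K + 3 - S K - 2)%nat with p by lia.
  replace (p + K + 3 + S K - 1)%nat with (p + 2*K + 3)%nat by lia.
  rewrite !LH_SS.
  pose proof (LH_pos p). pose proof (LH_pos (p + 2*K + 3)).
  rewrite !S_INR, !plus_INR, !mult_INR. simpl INR.
  pose proof (pos_INR p). pose proof (pos_INR K).
  field. repeat split; lra.
Qed.

Lemma Lrec_gen0 p : Nat.even p = true ->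
  let N := (p + 2)%nat in let k := 0%nat in
  Lcoef (S (S N)) k = 2*INR k/(2*INR k - 1) * Lcoef (S N) (pred k) + 2*(INR k+1)/(2*INR k+3) * Lcoef (S N) (S k) - Lcoef N k.
Proof.
  intros Hp N k. subst N k. simpl pred.
  assert (Hq : Nat.even (p + 2*0) = true) by (rewrite even_shift; exact Hp).
  rewrite (Lc_gen (S (S (p+2))) 0) by (lia || evn Hq).
  rewrite (Lc_gen (S (p+2)) 1) by (lia || evn Hq).
  rewrite (Lc_gen (p+2) 0) by (lia || evn Hq).
  replace (S (S (p + 2)) - 0 - 2)%nat with (S (S p)) by lia.
  replace (S (S (p + 2)) + 0 - 1)%nat with (S (S (p + 1))) by lia.
  replace (S (p + 2) - 1 - 2)%nat with p by lia.
  replace (S (p + 2) + 1 - 1)%nat with (S (S (p + 1))) by lia.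
  replace (p + 2 - 0 - 2)%nat with p by lia.
  replace (p + 2 + 0 - 1)%nat with (p + 1)%nat by lia.
  rewrite !LH_SS.
  pose proof (LH_pos p). pose proof (LH_pos (p + 1)).
  rewrite !S_INR, !plus_INR. simpl INR.
  pose proof (pos_INR p).
  field. repeat split; lra.
Qed.

Lemma Lrec_diag N :
  let k := S (S N) in
  Lcoef (S (S N)) k = 2*INR k/(2*INR k - 1) * Lcoef (S N) (pred k) + 2*(INR k+1)/(2*INR k+3) * Lcoef (S N) (S k) - Lcoef N k.
Proof.
  intros k. subst k. simpl pred.
  rewrite (Lc_high (S N) (S (S (S N)))) by lia. rewrite (Lc_high N (S (S N))) by lia.
  rewrite !Lc_diag.
  replace (2 * S (S N))%nat with (S (S (2 * S N))) by lia.
  rewrite LH_SS. pose proof (LH_pos (2 * S N)). pose proof sqrtPI_pos.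
  rewrite !S_INR, !mult_INR, !S_INR. simpl INR. pose proof (pos_INR N).
  field. repeat split; lra.
Qed.

Lemma Lrec_sub0 :
  Lcoef 2 0 = 2*INR 0/(2*INR 0 - 1) * Lcoef 1 (pred 0) + 2*(INR 0+1)/(2*INR 0+3) * Lcoef 1 1 - Lcoef 0 0.
Proof.
  rewrite (Lc_gen 2 0) by (lia || reflexivity). rewrite (Lc_diag 0). rewrite Lc_00.
  simpl Nat.sub. simpl Nat.add. simpl Nat.mul.
  rewrite (LH_SS 0). rewrite LH_0. pose proof sqrtPI_pos.
  assert (E : LambdaHalf 1 = 2 / sqrt PI).
  { pose proof (LH_prod 0) as P. rewrite LH_0 in P. simpl INR in P.
    apply (Rmult_eq_reg_l (sqrt PI)); [|lra]. rewrite P. field. lra. }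
  rewrite E. simpl INR. field. lra.
Qed.

Lemma Lrec_subS M :
  let N := S M in let k := S M in
  Lcoef (S (S N)) k = 2*INR k/(2*INR k - 1) * Lcoef (S N) (pred k) + 2*(INR k+1)/(2*INR k+3) * Lcoef (S N) (S k) - Lcoef N k.
Proof.
  intros N k. subst N k. simpl pred.
  assert (Hq : Nat.even (M + M) = true) by (replace (M+M)%nat with (0 + 2*M)%nat by lia; rewrite even_shift; reflexivity).
  rewrite (Lc_gen (S (S (S M))) (S M)) by (lia || evn Hq).
  rewrite (Lc_gen (S (S M)) M) by (lia || evn Hq).
  rewrite !Lc_diag.
  replace (S (S (S M)) - S M - 2)%nat with 0%nat by lia.
  replace (S (S M) - M - 2)%nat with 0%nat by lia.
  replace (S (S (S M)) + S M - 1)%nat with (S (2 * S M)) by lia.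
  replace (S (S M) + M - 1)%nat with (S (2 * M)) by lia.
  replace (2 * S (S M))%nat with (S (S (2 * S M))) by lia.
  rewrite LH_SS. rewrite LH_0.
  set (X := LambdaHalf (2 * S M)).
  assert (HX : 0 < X) by apply LH_pos.
  assert (E1 : LambdaHalf (S (2 * S M)) = 2 / (INR (2 * S M) + 1) / X).
  { pose proof (LH_prod (2 * S M)) as P. fold X in P. pose proof (pos_INR (2 * S M)). apply (Rmult_eq_reg_l X); [|lra]. rewrite P. field. split; lra. }
  assert (E2 : LambdaHalf (S (2 * M)) = 2 / (INR (2 * M) + 2) / X).
  { pose proof (LH_prod (S (2 * M))) as P. replace (S (S (2 * M))) with (2 * S M)%nat in P by lia. fold X in P.
    pose proof (pos_INR (2 * M)). apply (Rmult_eq_reg_l X); [|lra]. rewrite Rmult_comm, P, S_INR. field. split; lra. }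
  rewrite E1, E2. pose proof sqrtPI_pos.
  rewrite !mult_INR, !S_INR. simpl INR. pose proof (pos_INR M).
  field. repeat split; lra.
Qed.

Lemma Lrec N k :
  Lcoef (S (S N)) k = 2*INR k/(2*INR k - 1) * Lcoef (S N) (pred k) + 2*(INR k+1)/(2*INR k+3) * Lcoef (S N) (S k) - Lcoef N k.
Proof.
  destruct (Nat.even (N + k)) eqn:E.
  - destruct (lt_eq_lt_dec k N) as [[Hlt|Heq]|Hgt].
    +
      destruct (Nat.eq_dec N (S k)) as [HN|HN].
      { subst N. replace (S k + k)%nat with (1 + 2*k)%nat in E by lia. rewrite even_shift in E. discriminate. }
      destruct (Nat.eq_dec 0 0) as [_|]; [|congruence].
      set (p := (N - k - 2)%nat).
      assert (HNp : N = (p + k + 2)%nat) by (unfold p; lia).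
      assert (Hp : Nat.even p = true).
      { rewrite HNp in E. replace (p + k + 2 + k)%nat with (p + 2*(k+1))%nat in E by lia. rewrite even_shift in E. exact E. }
      clearbody p. subst N. destruct k as [|K].
      * replace (p + 0 + 2)%nat with (p + 2)%nat by lia. apply (Lrec_gen0 p Hp).
      * replace (p + S K + 2)%nat with (p + K + 3)%nat by lia. apply (Lrec_gen p K Hp).
    + subst k. destruct N as [|M]. apply Lrec_sub0. apply (Lrec_subS M).
    + destruct (Nat.eq_dec k (S N)) as [->|H1].
      { replace (N + S N)%nat with (1 + 2*N)%nat in E by lia. rewrite even_shift in E. discriminate. }
      destruct (Nat.eq_dec k (S (S N))) as [->|H2]. apply Lrec_diag.
      rewrite (Lc_high (S (S N)) k) by lia. rewrite (Lc_high (S N) (pred k)) by lia.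
      rewrite (Lc_high (S N) (S k)) by lia. rewrite (Lc_high N k) by lia. unfold Rdiv. ring.
  - destruct k as [|K].
    + rewrite (Lc_odd (S (S N)) 0) by (rewrite Nat.add_0_r in *; exact E).
      rewrite (Lc_odd (S N) 1) by (replace (S N + 1)%nat with (S (S (N + 0))) by lia; exact E).
      rewrite (Lc_odd N 0) by exact E. simpl INR. unfold Rdiv. ring.
    + rewrite (Lc_odd (S (S N)) (S K)) by evn E.
      rewrite (Lc_odd (S N) (pred (S K))) by (simpl pred; evn E).
      rewrite (Lc_odd (S N) (S (S K))) by evn E.
      rewrite (Lc_odd N (S K)) by exact E. unfold Rdiv. ring.
Qed.

Lemma sum_n_minus_R (f g : nat -> R) N : (sum_n (fun k => f k - g k) N : R) = sum_n f N - sum_n g N.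
Proof.
  induction N. rewrite !sum_O_R. reflexivity. rewrite !sum_Sn_R, IHN. ring.
Qed.

Lemma sum_n_ext_R (f g : nat -> R) N : (forall k, f k = g k) -> (sum_n f N : R) = sum_n g N.
Proof. intros H. apply sum_n_ext. exact H. Qed.

Lemma sum_n_scal_R (c : R) (f : nat -> R) N : (sum_n (fun k => c * f k) N : R) = c * sum_n f N.
Proof. induction N. rewrite !sum_O_R. reflexivity. rewrite !sum_Sn_R, IHN. ring. Qed.

Lemma sum_n_plus_R (f g : nat -> R) N : (sum_n (fun k => f k + g k) N : R) = sum_n f N + sum_n g N.
Proof. induction N. rewrite !sum_O_R. reflexivity. rewrite !sum_Sn_R, IHN. ring. Qed.

Definition Gc (u : nat -> R) k := 2*INR k/(2*INR k - 1) * u (pred k) + 2*(INR k+1)/(2*INR k+3) * u (S k).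

Lemma Leg_tel (u : nat -> R) x N :
  (sum_n (fun k => Gc u k * Legendre k x) N : R) - 2 * x * sum_n (fun l => u l * Legendre l x) N
  = 2*(INR N+1)/(2*INR N+3) * u (S N) * Legendre N x - 2*(INR N+1)/(2*INR N+1) * u N * Legendre (S N) x.
Proof.
  induction N.
  - rewrite !sum_O_R. unfold Gc. rewrite Legendre_0, Legendre_1. simpl INR. field.
  - rewrite !sum_Sn_R. pose proof (Legendre_SS N x) as H. pose proof (pos_INR N).
    unfold Gc at 2. simpl pred. rewrite !S_INR in *.
    assert (E : 2 * x * Legendre (S N) x = 2 * ((INR N + 2) * Legendre (S (S N)) x + (INR N + 1) * Legendre N x) / (2 * INR N + 3)).
    { rewrite H. field. lra. }
    apply (f_equal (fun z => u (S N) * z)) in E.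
    assert (A : 2 * INR N + 3 <> 0) by lra. assert (B : 2*INR N + 1 <> 0) by lra.
    assert (C : 2 * (INR N + 1) - 1 <> 0) by lra. assert (D : 2 * (INR N + 1) + 3 <> 0) by lra.
    revert IHN E. generalize (sum_n (fun k : nat => Gc u k * Legendre k x) N) (sum_n (fun l : nat => u l * Legendre l x) N).
    intros S1 S2 IH E.
    replace (S1 + (2 * (INR N + 1) / (2 * (INR N + 1) - 1) * u N + 2 * (INR N + 1 + 1) / (2 * (INR N + 1) + 3) * u (S (S N))) * Legendre (S N) x - 2 * x * (S2 + u (S N) * Legendre (S N) x))
      with ((S1 - 2*x*S2) + (2 * (INR N + 1) / (2 * (INR N + 1) - 1) * u N + 2 * (INR N + 1 + 1) / (2 * (INR N + 1) + 3) * u (S (S N))) * Legendre (S N) x - u (S N) * (2 * x * Legendre (S N) x)) by ring.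
    rewrite IH, E. field. lra.
Qed.

Definition Cheb n x : R := sum_n (fun l => Lcoef n l * Legendre l x) n.

Lemma ChebN_ext n N x : (n <= N)%nat -> (sum_n (fun l => Lcoef n l * Legendre l x) N : R) = Cheb n x.
Proof.
  intros H. induction H; [reflexivity|]. rewrite sum_Sn_R, IHle. rewrite Lc_high by lia. ring.
Qed.

Lemma Cheb_0 x : Cheb 0 x = 1.
Proof. unfold Cheb. rewrite sum_O_R. rewrite Lc_00, Legendre_0. ring. Qed.

Lemma Lc_11 : Lcoef 1 1 = 1.
Proof.
  rewrite Lc_diag. simpl Nat.mul. rewrite (LH_SS 0), LH_0. pose proof sqrtPI_pos. simpl INR. field. lra.
Qed.

Lemma Cheb_1 x : Cheb 1 x = x.
Proof.
  unfold Cheb. rewrite sum_Sn_R, sum_O_R. rewrite Lc_11, (Lc_odd 1 0) by reflexivity.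
  rewrite Legendre_1. ring.
Qed.

Lemma Cheb_SS N x : Cheb (S (S N)) x = 2 * x * Cheb (S N) x - Cheb N x.
Proof.
  pose proof (Leg_tel (Lcoef (S N)) x (S (S N))) as H.
  rewrite (Lc_high (S N) (S (S N))), (Lc_high (S N) (S (S (S N)))) in H by lia.
  rewrite ChebN_ext in H by lia.
  assert (E : (sum_n (fun k => Gc (Lcoef (S N)) k * Legendre k x) (S (S N)) : R)
     = sum_n (fun k => Lcoef (S (S N)) k * Legendre k x + Lcoef N k * Legendre k x) (S (S N))).
  { apply sum_n_ext_R. intros k. unfold Gc. rewrite (Lrec N k). ring. }
  rewrite E in H. rewrite sum_n_plus_R in H.
  rewrite (ChebN_ext N (S (S N))) in H by lia.
  fold (Cheb (S (S N)) x) in H. lra.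
Qed.

Lemma Cheb_cos n t : Cheb n (cos t) = cos (INR n * t).
Proof.
  revert n. apply nat_ind2; cbv beta.
  - rewrite Cheb_0. simpl. rewrite Rmult_0_l, cos_0. reflexivity.
  - rewrite Cheb_1. simpl. f_equal. ring.
  - intros k H0 H1. rewrite Cheb_SS, H0, H1. pose proof (cos_rec k t). lra.
Qed.

Lemma Cheb_bound n c : -1 <= c <= 1 -> Rabs (Cheb n c) <= 1.
Proof.
  intros Hc. rewrite <- (cos_acos c) by lra. rewrite Cheb_cos. apply Rabs_le. apply COS_bound.
Qed.

Lemma alg_E (c x A B: R) : 0 < 1 - 2*c*x + x^2 -> (1 - 2 * c * x + x ^ 2) * ((c - x) / (1 - 2 * c * x + x ^ 2)) -
 (c - x - A + B) = (1 - 2 * c * x + x ^ 2) * ((A - B) / (1 - 2 * c * x + x ^ 2)).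
Proof. intros. field. lra. Qed.

Section LogSeries.
Variable c : R.
Hypothesis Hc : -1 <= c <= 1.
Local Notation T n := (Cheb n c).

Lemma tel s N : (1 - 2*c*s + s^2) * (sum_n (fun k => T (S k) * s^k) N : R)
  = (c - s) - s^(S N) * T (S (S N)) + s^(S (S N)) * T (S N).
Proof.
  induction N.
  - rewrite sum_O_R. rewrite Cheb_SS, Cheb_1, Cheb_0. simpl. ring.
  - rewrite sum_Sn_R. rewrite Rmult_plus_distr_l, IHN. rewrite (Cheb_SS (S N)). simpl. ring.
Qed.

Definition gl s := - / 2 * ln (1 - 2*c*s + s^2).
Definition FN N s : R := sum_n (fun k => T (S k) * s^(S k) / INR (S k)) N.
Definition SN N s : R := sum_n (fun k => T (S k) * s^k) N.

Lemma D_pos s : Rabs s < 1 -> 0 < 1 - 2*c*s + s^2.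
Proof.
  intros Hs. assert (H: (1 - Rabs s)^2 <= 1 - 2*c*s + s^2).
  { assert (c * s <= Rabs s). { destruct (Rle_dec 0 s). rewrite Rabs_right by lra. nra. rewrite Rabs_left by lra. nra. }
    rewrite <- (pow2_abs s). nra. }
  assert (0 < (1 - Rabs s)^2) by (apply pow_lt; lra). lra.
Qed.

Lemma FN_deriv N s : is_derive (FN N) s (SN N s).
Proof.
  unfold FN, SN. apply (is_derive_sum_n (fun k s => T (S k) * s^(S k) / INR (S k))).
  intros k _. auto_derive; [auto|]. destruct k as [|k]; [field|]. pose proof (pos_INR (S k)). field. lra.
Qed.

Lemma gl_deriv s : Rabs s < 1 -> is_derive gl s ((c - s) / (1 - 2*c*s + s^2)).
Proof.
  intros Hs. pose proof (D_pos s Hs). unfold gl. auto_derive; [lra|]. field. lra.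
Qed.

Lemma EN_bound N t : 0 <= t < 1 -> Rabs (gl t - FN N t) <= t * (2 * t^(S N) / (1 - t)^2).
Proof.
  intros Ht.
  destruct (MVT_cor4 (fun s => gl s - FN N s) (fun s => (c - s) / (1 - 2*c*s + s^2) - SN N s) 0 t) with (b := t) as [x [Hx1 Hx2]].
  - intros x Hx. apply (is_derive_minus gl (FN N)). apply gl_deriv. rewrite Rminus_0_r in Hx. lra. apply FN_deriv.
  - rewrite Rminus_0_r, Rabs_right; lra.
  - rewrite !Rminus_0_r in *. rewrite (Rabs_right t) in Hx2 by lra.
    assert (Hf0 : gl 0 - FN N 0 = 0).
    { unfold gl, FN. replace (1 - 2*c*0 + 0^2) with 1 by ring. rewrite ln_1.
      rewrite (sum_n_ext_R _ (fun _ => 0)). 2:{ intros k. rewrite pow_i by lia. unfold Rdiv. ring. }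
      assert (forall M, (sum_n (fun _ : nat => 0) M : R) = 0) as Z.
      { induction M. rewrite sum_O_R; reflexivity. rewrite sum_Sn_R, IHM. ring. }
      rewrite Z. ring. }
    rewrite Hf0, Rminus_0_r in Hx1. rewrite Hx1.
    assert (Hxa : Rabs x < 1) by lra.
    pose proof (D_pos x Hxa) as HD.
    assert (E : (c - x) / (1 - 2 * c * x + x ^ 2) - SN N x = (x^(S N) * T (S (S N)) - x^(S (S N)) * T (S N)) / (1 - 2 * c * x + x ^ 2)).
    { unfold SN. apply (Rmult_eq_reg_l (1 - 2 * c * x + x ^ 2)); [|lra].
      rewrite Rmult_minus_distr_l, tel. apply alg_E; lra. }
    rewrite E. rewrite Rabs_mult, (Rabs_right t) by lra. rewrite (Rmult_comm _ t). apply Rmult_le_compat_l; [lra|].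
    rewrite Rabs_div by lra. rewrite (Rabs_right (1 - 2*c*x + x^2)) by lra.
    assert (HT1 := Cheb_bound (S N) c Hc). assert (HT2 := Cheb_bound (S (S N)) c Hc). 
    assert (Hxp : Rabs x ^ S N <= t ^ S N) by (apply pow_incr; split; [apply Rabs_pos|lra]).
    assert (Hnum : Rabs (x ^ S N * T (S (S N)) - x ^ S (S N) * T (S N)) <= 2 * t^(S N)).
    { unfold Rminus. eapply Rle_trans; [apply Rabs_triang|]. rewrite Rabs_Ropp, !Rabs_mult, <- !RPow_abs.
      assert (Rabs x ^ S (S N) <= Rabs x ^ S N). { rewrite <- (tech_pow_Rmult (Rabs x) (S N)). assert (Rabs x <= 1) by lra.
        pose proof (pow_le (Rabs x) (S N) (Rabs_pos x)). nra. }
      pose proof (pow_le (Rabs x) (S N) (Rabs_pos x)). pose proof (pow_le (Rabs x) (S (S N)) (Rabs_pos x)).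
      pose proof (Rabs_pos (T (S N))). pose proof (Rabs_pos (T (S (S N)))). nra. }
    assert (HDb : (1 - t)^2 <= 1 - 2*c*x + x^2).
    { assert (c * x <= Rabs x). { destruct (Rle_dec 0 x). rewrite Rabs_right by lra. nra. rewrite Rabs_left by lra. nra. }
      rewrite <- (pow2_abs x). 
      assert (0 <= 1 - t) by lra. assert (1 - t <= 1 - Rabs x) by lra. nra. }
    assert (0 < (1 - t)^2) by (apply pow_lt; lra).
    unfold Rdiv. apply Rmult_le_compat; try lra. apply Rabs_pos. left; apply Rinv_0_lt_compat; lra.
    apply Rinv_le_contravar; lra.
Qed.

Lemma log_series t : 0 <= t < 1 -> is_series (fun k => T (S k) * t^(S k) / INR (S k)) (gl t).
Proof.
  intros Ht.
  set (K := 2 * t^2 / (1-t)^2).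
  assert (HK : is_lim_seq (fun N => K * t^N) 0).
  { replace (Finite 0) with (Rbar_mult K 0) by (simpl; f_equal; ring).
    apply is_lim_seq_scal_l. apply is_lim_seq_geom. rewrite Rabs_right; lra. }
  assert (HmK : is_lim_seq (fun N => - (K * t^N)) 0).
  { apply (is_lim_seq_ext (fun N => (-K) * t^N)). intros; ring.
    replace (Finite 0) with (Rbar_mult (-K) 0) by (simpl; f_equal; ring).
    apply is_lim_seq_scal_l. apply is_lim_seq_geom. rewrite Rabs_right; lra. }
  assert (H0 : is_lim_seq (fun N => gl t - FN N t) 0).
  { apply (is_lim_seq_le_le (fun N => - (K * t^N)) _ (fun N => K * t^N)); [|exact HmK|exact HK].
    intros N. pose proof (EN_bound N t Ht) as B.
    assert (E : t * (2 * t ^ S N / (1 - t) ^ 2) = K * t^N) by (unfold K; simpl; field; lra).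
    rewrite E in B. apply Rabs_le_between in B. lra. }
  assert (H1 : is_lim_seq (fun N => FN N t) (gl t)).
  { apply is_lim_seq_ext with (fun N => gl t - (gl t - FN N t)). intros; ring.
    replace (Finite (gl t)) with (Rbar_minus (gl t) 0) by (simpl; f_equal; ring).
    apply is_lim_seq_minus'. apply is_lim_seq_const. exact H0. }
  exact H1.
Qed.
End LogSeries.

Lemma is_series_RtoC (a : nat -> R) l : is_series a l -> is_series (fun k => RtoC (a k)) (RtoC l).
Proof.
  intros H. unfold is_series in *.
  assert (E : forall N, sum_n (fun k => RtoC (a k)) N = RtoC (sum_n a N)).
  { induction N. rewrite !sum_O. reflexivity. rewrite !sum_Sn, IHN. apply injective_projections; simpl; unfold plus; simpl; ring. }
  apply filterlim_ext with (fun N => RtoC (sum_n a N)). intros; rewrite E; reflexivity.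
  apply filterlim_locally. intros eps.
  pose proof (proj1 (filterlim_locally _ _) H eps) as H'. clear H. rename H' into H.
  eapply filter_imp; [|exact H]. intros N HN. 
  split; simpl. exact HN. apply ball_center.
Qed.

Lemma sum_n_RtoC (f : nat -> R) N : sum_n (fun k => RtoC (f k)) N = RtoC (sum_n f N).
Proof.
  induction N. rewrite !sum_O. reflexivity. rewrite !sum_Sn, IHN. apply injective_projections; simpl; unfold plus; simpl; ring.
Qed.

Lemma sum_n_front {G : AbelianMonoid} (f : nat -> G) n : sum_n f (S n) = plus (f 0%nat) (sum_n (fun k => f (S k)) n).
Proof.
  induction n.
  - rewrite sum_Sn, !sum_O. reflexivity.
  - rewrite sum_Sn, IHn, sum_Sn. rewrite plus_assoc. reflexivity.
Qed.

Definition symterm (g : Z -> C) (k : nat) : C :=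
  match k with O => g 0%Z | S _ => Cplus (g (Z.of_nat k)) (g (- Z.of_nat k)%Z) end.

Lemma sum_m_sym l (g : Z -> C) : sum_m l g = sum_n (symterm g) l.
Proof.
  induction l.
  - unfold sum_m. simpl. rewrite !sum_O. reflexivity.
  - unfold sum_m in *. replace (2 * S l)%nat with (S (S (2 * l))) by lia.
    rewrite sum_Sn, sum_n_front. rewrite (sum_Sn (symterm g)). rewrite <- IHl.
    rewrite (sum_n_ext (fun k => g (Z.of_nat (S k) - Z.of_nat (S l))%Z) (fun k => g (Z.of_nat k - Z.of_nat l)%Z)).
    2:{ intros k. f_equal. lia. }
    simpl symterm.
    replace (Z.of_nat 0 - Z.of_nat (S l))%Z with (- Z.of_nat (S l))%Z by lia.
    replace (Z.of_nat (S (S (2 * l))) - Z.of_nat (S l))%Z with (Z.of_nat (S l)) by lia.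
    set (A := g (- Z.of_nat (S l))%Z). set (B := g (Z.of_nat (S l))).
    set (X := sum_n (fun k : nat => g (Z.of_nat k - Z.of_nat l)%Z) (2 * l)).
    change (Cplus (Cplus A X) B = Cplus X (Cplus B A)).
    apply injective_projections; simpl; ring.
Qed.


Definition Nlm l k := sqrt ((2*INR l+1)/(4*PI) * (INR (fact (l-k)) / INR (fact (l+k)))).
Definition Y0 l k th := Nlm l k * assocLegendre l k (cos th).

Lemma Ylm_eq l m th ph : Ylm l m th ph = (Y0 l (Z.abs_nat m) th * cos (IZR m * ph), Y0 l (Z.abs_nat m) th * sin (IZR m * ph)).
Proof.
  unfold Ylm, Y0, Nlm. cbv zeta. unfold Cmult, RtoC. simpl. apply injective_projections; simpl; ring.
Qed.

Definition Qv th' ph' (l : nat) (m : Z) : C := Cmult (RtoC (sqrt (4*PI/(2*INR l+1)))) (Cconj (Ylm l m th' ph')).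

Lemma QY_eq th ph th' ph' l m :
  Cmult (Qv th' ph' l m) (Ylm l m th ph) =
  (sqrt (4*PI/(2*INR l+1)) * Y0 l (Z.abs_nat m) th' * Y0 l (Z.abs_nat m) th * cos (IZR m * (ph - ph')),
   sqrt (4*PI/(2*INR l+1)) * Y0 l (Z.abs_nat m) th' * Y0 l (Z.abs_nat m) th * sin (IZR m * (ph - ph'))).
Proof.
  unfold Qv. rewrite !Ylm_eq. unfold Cmult, Cconj, RtoC. simpl.
  replace (IZR m * (ph - ph')) with (IZR m * ph - IZR m * ph') by ring.
  rewrite cos_minus, sin_minus.
  apply injective_projections; simpl; ring.
Qed.

Lemma assoc_prod l k a b : assocLegendre l k a * assocLegendre l k b
  = (sqrt (1 - a^2) * sqrt (1 - b^2))^k * DL l k a * DL l k b.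
Proof.
  unfold assocLegendre. rewrite !Derive_n_Legendre. rewrite Rpow_mult_distr.
  assert (H : (-1)^k * (-1)^k = 1). { rewrite <- Rpow_mult_distr. replace (-1 * -1) with 1 by ring. apply pow1. }
  transitivity (((-1)^k * (-1)^k) * (sqrt (1 - a ^ 2) ^ k * sqrt (1 - b ^ 2) ^ k * DL l k a * DL l k b)); [ring|].
  rewrite H. ring.
Qed.

Lemma Nlm_sq l k : Nlm l k * Nlm l k = (2*INR l+1)/(4*PI) * cf l k.
Proof.
  unfold Nlm, cf. apply sqrt_sqrt. apply Rmult_le_pos.
  - apply Rdiv_le_0_compat. pose proof (pos_INR l). lra. pose proof PI_RGT_0. lra.
  - left. apply Rdiv_lt_0_compat; apply INR_fact_pos.
Qed.

Definition Kl l := sqrt (4*PI/(2*INR l+1)) * ((2*INR l+1)/(4*PI)).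

Lemma QY_tt th ph th' ph' l m :
  Cmult (Qv th' ph' l m) (Ylm l m th ph) =
  (Kl l * ttm (cos th) (cos th') (sqrt (1 - cos th ^2) * sqrt (1 - cos th' ^2)) l (Z.abs_nat m) * cos (IZR m * (ph - ph')),
   Kl l * ttm (cos th) (cos th') (sqrt (1 - cos th ^2) * sqrt (1 - cos th' ^2)) l (Z.abs_nat m) * sin (IZR m * (ph - ph'))).
Proof.
  rewrite QY_eq. unfold Y0.
  set (k := Z.abs_nat m).
  assert (E : sqrt (4 * PI / (2 * INR l + 1)) * (Nlm l k * assocLegendre l k (cos th')) * (Nlm l k * assocLegendre l k (cos th))
     = Kl l * ttm (cos th) (cos th') (sqrt (1 - cos th ^2) * sqrt (1 - cos th' ^2)) l k).
  { transitivity (sqrt (4 * PI / (2 * INR l + 1)) * (Nlm l k * Nlm l k) * (assocLegendre l k (cos th) * assocLegendre l k (cos th'))); [ring|].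
    rewrite Nlm_sq, assoc_prod. unfold Kl, ttm. ring. }
  rewrite E. reflexivity.
Qed.

Lemma abs_nat_pos k : Z.abs_nat (Z.of_nat k) = k.
Proof. lia. Qed.
Lemma abs_nat_neg k : Z.abs_nat (- Z.of_nat k) = k.
Proof. lia. Qed.

Lemma sum_QY th ph th' ph' l :
  sum_m l (fun m => Cmult (Qv th' ph' l m) (Ylm l m th ph)) =
  RtoC (Kl l * Wt (cos th) (cos th') (sqrt (1 - cos th ^2) * sqrt (1 - cos th' ^2)) (ph - ph') l l).
Proof.
  rewrite sum_m_sym. unfold Wt. rewrite <- sum_n_scal_R. rewrite <- sum_n_RtoC.
  apply sum_n_ext. intros k. unfold symterm. destruct k as [|K].
  - rewrite QY_tt. simpl Z.abs_nat. simpl IZR. simpl INR. rewrite !Rmult_0_l, cos_0, sin_0.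
    unfold RtoC. simpl eps. apply injective_projections; simpl; ring.
  - rewrite !QY_tt. rewrite abs_nat_pos, abs_nat_neg.
    rewrite opp_IZR, <- INR_IZR_INZ.
    replace (- INR (S K) * (ph - ph')) with (- (INR (S K) * (ph - ph'))) by ring.
    rewrite cos_neg, sin_neg. unfold Cplus, RtoC. simpl eps. apply injective_projections; simpl; ring.
Qed.

Lemma Cmod_Qv th' ph' l m : Cmod (Qv th' ph' l m) ^ 2 = ttm (cos th') (cos th') (sqrt (1 - cos th' ^2) * sqrt (1 - cos th' ^2)) l (Z.abs_nat m).
Proof.
  unfold Cmod. rewrite pow2_sqrt. 2:{ pose proof (pow2_ge_0 (fst (Qv th' ph' l m))). pose proof (pow2_ge_0 (snd (Qv th' ph' l m))). lra. }
  unfold Qv. rewrite Ylm_eq. unfold Cmult, Cconj, RtoC. simpl fst. simpl snd.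
  set (k := Z.abs_nat m). set (q := 4 * PI / (2 * INR l + 1)).
  assert (Hq : sqrt q * sqrt q = q). { apply sqrt_sqrt. unfold q. apply Rdiv_le_0_compat. pose proof PI_RGT_0. lra. pose proof (pos_INR l). lra. }
  assert (Hcs : cos (IZR m * ph') ^ 2 + sin (IZR m * ph') ^ 2 = 1) by (rewrite <- (sin2_cos2 (IZR m * ph')); unfold Rsqr; ring).
  transitivity ((sqrt q * sqrt q) * (Y0 l k th' * Y0 l k th') * (cos (IZR m * ph') ^ 2 + sin (IZR m * ph') ^ 2)); [ring|].
  rewrite Hq, Hcs. unfold Y0.
  transitivity (q * (Nlm l k * Nlm l k) * (assocLegendre l k (cos th') * assocLegendre l k (cos th'))); [ring|].
  rewrite Nlm_sq, assoc_prod. unfold q, ttm. field. split. pose proof PI_RGT_0. lra. pose proof (pos_INR l). lra.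
Qed.

Lemma Legendre_at1 l : Legendre l 1 = 1.
Proof.
  revert l. apply nat_ind2; cbv beta. reflexivity. reflexivity.
  intros k H0 H1. rewrite Legendre_SS, H0, H1. pose proof (pos_INR k). field. lra.
Qed.

Lemma norm_Qv th' ph' l : sum_m l (fun m => RtoC (Cmod (Qv th' ph' l m) ^ 2)) = RtoC 1.
Proof.
  assert (Hsb : sqrt (1 - cos th' ^2) * sqrt (1 - cos th' ^2) = 1 - cos th' ^2).
  { apply sqrt_sqrt. pose proof (COS_bound th'). nra. }
  rewrite sum_m_sym.
  transitivity (sum_n (fun k => RtoC (eps k * ttm (cos th') (cos th') (sqrt (1 - cos th' ^2) * sqrt (1 - cos th' ^2)) l k * cos (INR k * 0))) l).
  { apply sum_n_ext. intros k. unfold symterm. destruct k as [|K].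
    - rewrite Cmod_Qv. simpl eps. simpl Z.abs_nat. rewrite Rmult_0_r, cos_0. f_equal. ring.
    - rewrite !Cmod_Qv, abs_nat_pos, abs_nat_neg. rewrite Rmult_0_r, cos_0. simpl eps.
      unfold Cplus, RtoC. apply injective_projections; simpl; ring. }
  rewrite sum_n_RtoC. f_equal. fold (Wt (cos th') (cos th') (sqrt (1 - cos th' ^2) * sqrt (1 - cos th' ^2)) 0 l l).
  rewrite addition_real. rewrite cos_0. rewrite Hsb.
  replace (cos th' * cos th' + (1 - cos th' ^ 2) * 1) with 1 by ring. apply Legendre_at1.
  rewrite Hsb. ring.
Qed.

Lemma polar2 (y1 y2 : R) : 0 < y1^2 + y2^2 -> exists ph,
  cos ph = y1 / sqrt (y1^2 + y2^2) /\ sin ph = y2 / sqrt (y1^2 + y2^2).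
Proof.
  intros H. set (rho := sqrt (y1^2 + y2^2)).
  assert (Hr : 0 < rho) by (apply sqrt_lt_R0; lra).
  assert (Hr2 : rho * rho = y1^2 + y2^2) by (apply sqrt_sqrt; lra).
  assert (Hb : -1 <= y1 / rho <= 1).
  { assert (y1^2 <= rho^2) by nra. split.
    - apply (Rmult_le_reg_r rho); [lra|]. field_simplify; [|lra]. nra.
    - apply (Rmult_le_reg_r rho); [lra|]. field_simplify; [|lra]. nra. }
  assert (Hs : sqrt (1 - (y1/rho)²) = Rabs y2 / rho).
  { apply sqrt_lem_1.
    - unfold Rsqr. assert ((y1/rho)*(y1/rho) <= 1) by (destruct Hb; nra). lra.
    - apply Rdiv_le_0_compat; [apply Rabs_pos|lra].
    - unfold Rsqr. assert (HA : Rabs y2 * Rabs y2 = y2^2) by (rewrite <- (pow2_abs y2); ring).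
      transitivity ((Rabs y2 * Rabs y2)/(rho*rho)); [field; lra|]. rewrite HA.
      replace (y2^2) with (rho*rho - y1^2) by lra. field. lra. }
  destruct (Rle_dec 0 y2) as [Hy|Hy].
  - exists (acos (y1 / rho)). rewrite cos_acos by exact Hb. rewrite sin_acos by exact Hb. rewrite Hs.
    rewrite Rabs_right by lra. split; reflexivity.
  - exists (- acos (y1 / rho)). rewrite cos_neg, sin_neg, cos_acos by exact Hb. rewrite sin_acos by exact Hb. rewrite Hs.
    rewrite Rabs_left by lra. split; [reflexivity|]. field. lra.
Qed.

Lemma sph_exists (y : R * R * R) : exists th ph, 0 <= th <= PI /\ y = sph (norm3 y) th ph.
Proof.
  destruct y as [[y1 y2] y3]. unfold norm3.
  set (r := sqrt (y1^2 + y2^2 + y3^2)).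
  destruct (Req_dec (y1^2 + y2^2 + y3^2) 0) as [H0|H0].
  - assert (y1 = 0 /\ y2 = 0 /\ y3 = 0) as [-> [-> ->]].
    { pose proof (pow2_ge_0 y1). pose proof (pow2_ge_0 y2). pose proof (pow2_ge_0 y3). repeat split; nra. }
    exists 0, 0. split. pose proof PI_RGT_0. lra. unfold sph, r.
    replace (0^2 + 0^2 + 0^2) with 0 by ring. rewrite sqrt_0. f_equal; [f_equal|]; ring.
  - assert (Hpos : 0 < y1^2 + y2^2 + y3^2) by (pose proof (pow2_ge_0 y1); pose proof (pow2_ge_0 y2); pose proof (pow2_ge_0 y3); lra).
    assert (Hr : 0 < r) by (apply sqrt_lt_R0; lra).
    assert (Hr2 : r * r = y1^2 + y2^2 + y3^2) by (apply sqrt_sqrt; lra).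
    assert (Hb : -1 <= y3 / r <= 1).
    { assert (y3^2 <= r^2) by (pose proof (pow2_ge_0 y1); pose proof (pow2_ge_0 y2); nra). split.
      - apply (Rmult_le_reg_r r); [lra|]. field_simplify; [|lra]. nra.
      - apply (Rmult_le_reg_r r); [lra|]. field_simplify; [|lra]. nra. }
    set (rho := sqrt (y1^2 + y2^2)).
    assert (Hrho0 : 0 <= rho) by apply sqrt_pos.
    assert (Hrho2 : rho * rho = y1^2 + y2^2) by (apply sqrt_sqrt; pose proof (pow2_ge_0 y1); pose proof (pow2_ge_0 y2); lra).
    assert (Hsin : r * sin (acos (y3 / r)) = rho).
    { rewrite sin_acos by exact Hb.
      assert (sqrt (1 - (y3/r)²) = rho / r).
      { apply sqrt_lem_1.
        - unfold Rsqr. assert ((y3/r)*(y3/r) <= 1) by (destruct Hb; nra). lra.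
        - apply Rdiv_le_0_compat; lra.
        - unfold Rsqr. transitivity ((rho*rho)/(r*r)); [field; lra|]. rewrite Hrho2.
          replace (y1^2+y2^2) with (r*r - y3^2) by lra. field. lra. }
      rewrite H. field. lra. }
    destruct (Req_dec (y1^2 + y2^2) 0) as [H1|H1].
    + assert (y1 = 0 /\ y2 = 0) as [-> ->].
      { pose proof (pow2_ge_0 y1). pose proof (pow2_ge_0 y2). split; nra. }
      exists (acos (y3 / r)), 0. split. apply acos_bound.
      unfold sph. fold r. rewrite cos_0, sin_0. rewrite cos_acos by exact Hb.
      replace (r * sin (acos (y3 / r)) * 1) with rho by lra.
      assert (rho = 0). { unfold rho. replace (0^2+0^2) with 0 by ring. apply sqrt_0. }
      f_equal; [f_equal|]; first [ lra | ring | (field; lra) | (rewrite H; ring) ].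
    + assert (Hp : 0 < y1^2 + y2^2) by (pose proof (pow2_ge_0 y1); pose proof (pow2_ge_0 y2); lra).
      destruct (polar2 y1 y2 Hp) as [ph [Hc Hs]]. fold rho in Hc, Hs.
      assert (Hrho : 0 < rho) by (apply sqrt_lt_R0; lra).
      exists (acos (y3 / r)), ph. split. apply acos_bound.
      unfold sph. fold r. rewrite Hsin, Hc, Hs, cos_acos by exact Hb.
      f_equal; [f_equal|]; field; lra.
Qed.

Lemma sqrt_sin th : 0 <= th <= PI -> sqrt (1 - cos th ^ 2) = sin th.
Proof.
  intros H. apply sqrt_lem_1.
  - pose proof (COS_bound th). nra.
  - apply sin_ge_0; lra.
  - pose proof (sin2_cos2 th). unfold Rsqr in H0. nra.
Qed.

Lemma ln_sqrt' z : 0 < z -> ln (sqrt z) = ln z / 2.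
Proof.
  intros H. assert (Hs : 0 < sqrt z) by (apply sqrt_lt_R0; exact H).
  assert (ln z = ln (sqrt z) + ln (sqrt z)). { rewrite <- ln_mult by exact Hs. rewrite sqrt_sqrt; lra. }
  lra.
Qed.

Lemma cg_bound th th' psi : 0 <= th <= PI -> 0 <= th' <= PI ->
  -1 <= cos th * cos th' + sin th * sin th' * cos psi <= 1.
Proof.
  intros H1 H2. pose proof (sin_ge_0 th ltac:(lra) ltac:(lra)). pose proof (sin_ge_0 th' ltac:(lra) ltac:(lra)).
  pose proof (COS_bound psi). pose proof (COS_bound (th - th')). pose proof (COS_bound (th + th')).
  rewrite cos_minus in *. rewrite cos_plus in *.
  assert (0 <= sin th * sin th') by (apply Rmult_le_pos; lra).
  split; nra.
Qed.

Lemma dist_formula R r th ph th' ph' :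
  norm3 (sub3 (sph R th ph) (sph r th' ph')) =
  sqrt (R^2 - 2*R*r*(cos th * cos th' + sin th * sin th' * cos (ph - ph')) + r^2).
Proof.
  unfold norm3, sub3, sph. f_equal. rewrite cos_minus.
  pose proof (sin2_cos2 th) as A1. pose proof (sin2_cos2 ph) as A2.
  pose proof (sin2_cos2 th') as A3. pose proof (sin2_cos2 ph') as A4. unfold Rsqr in *.
  assert (B1 : R^2 * (sin th * sin th) * (sin ph * sin ph + cos ph * cos ph) = R^2 * (sin th * sin th)) by (rewrite A2; ring).
  assert (B2 : R^2 * (sin th * sin th + cos th * cos th) = R^2) by (rewrite A1; ring).
  assert (B3 : r^2 * (sin th' * sin th') * (sin ph' * sin ph' + cos ph' * cos ph') = r^2 * (sin th' * sin th')) by (rewrite A4; ring).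
  assert (B4 : r^2 * (sin th' * sin th' + cos th' * cos th') = r^2) by (rewrite A3; ring).
  lra.
Qed.

Theorem mainTheorem4 :
  forall y : R * R * R,
  exists Q : nat -> Z -> C,
    (forall l : nat, sum_m l (fun m => RtoC (Cmod (Q l m) ^ 2)) = RtoC 1) /\
    (forall Rr theta phi : R,
       0 <= theta <= PI -> 0 <= phi < 2 * PI -> Rr > norm3 y ->
       is_series
         (fun k : nat =>
            let n := S k in
            Cmult (RtoC (norm3 y ^ n / INR n / Rr ^ n))
              (sum_n (fun l : nat =>
                        Cmult (RtoC (Lcoef n l * sqrt (4 * PI / (2 * INR l + 1))))
                              (sum_m l (fun m => Cmult (Q l m) (Ylm l m theta phi)))) n))
         (RtoC (ln Rr - ln (norm3 (sub3 (sph Rr theta phi) y))))).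
Proof.
  intros y. destruct (sph_exists y) as [th' [ph' [Hth' Hy]]].
  exists (Qv th' ph'). split. { intros l. apply norm_Qv. }
  intros Rr th ph Hth Hph HR.
  set (r := norm3 y) in *.
  assert (Hr0 : 0 <= r) by (unfold r, norm3; destruct y as [[? ?] ?]; apply sqrt_pos).
  set (a := cos th). set (b := cos th').
  set (s := sqrt (1 - a^2) * sqrt (1 - b^2)).
  set (cg := a * b + s * cos (ph - ph')).
  assert (Hs : s^2 = (1 - a^2) * (1 - b^2)).
  { unfold s. rewrite Rpow_mult_distr. rewrite !pow2_sqrt. reflexivity.
    unfold b; pose proof (COS_bound th'); nra. unfold a; pose proof (COS_bound th); nra. }
  assert (Hcg : -1 <= cg <= 1).
  { unfold cg, s, a, b. rewrite !sqrt_sin by assumption. apply cg_bound; assumption. }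
  set (t := r / Rr).
  assert (HRpos : 0 < Rr) by lra.
  assert (Ht : 0 <= t < 1). { unfold t. split. apply Rdiv_le_0_compat; lra. apply (Rmult_lt_reg_r Rr); [lra|]. field_simplify; lra. }
  pose proof (is_series_RtoC _ _ (log_series cg Hcg t Ht)) as HS.
  assert (Hterm : forall k, RtoC (Cheb (S k) cg * t ^ S k / INR (S k)) =
     (let n := S k in
      Cmult (RtoC (r ^ n / INR n / Rr ^ n))
        (sum_n (fun l : nat =>
                 Cmult (RtoC (Lcoef n l * sqrt (4 * PI / (2 * INR l + 1))))
                   (sum_m l (fun m => Cmult (Qv th' ph' l m) (Ylm l m th ph)))) n))).
  { intros k. cbv zeta.
    rewrite (sum_n_ext _ (fun l => RtoC (Lcoef (S k) l * Legendre l cg))).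
    2:{ intros l. rewrite sum_QY. fold a b s. rewrite addition_real by exact Hs. fold cg.
        rewrite <- RtoC_mult. f_equal. unfold Kl.
        assert (Hq : sqrt (4 * PI / (2 * INR l + 1)) * sqrt (4 * PI / (2 * INR l + 1)) = 4 * PI / (2 * INR l + 1)).
        { apply sqrt_sqrt. apply Rdiv_le_0_compat. pose proof PI_RGT_0. lra. pose proof (pos_INR l). lra. }
        transitivity (Lcoef (S k) l * (sqrt (4 * PI / (2 * INR l + 1)) * sqrt (4 * PI / (2 * INR l + 1))) * ((2 * INR l + 1) / (4 * PI)) * Legendre l cg); [ring|].
        rewrite Hq. field. split. pose proof PI_RGT_0. lra. pose proof (pos_INR l). lra. }
    rewrite sum_n_RtoC. fold (Cheb (S k) cg). rewrite <- RtoC_mult. f_equal.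
    unfold t. unfold Rdiv. rewrite Rpow_mult_distr, pow_inv. ring. }
  eapply is_series_ext; [exact Hterm|].
  replace (ln Rr - ln (norm3 (sub3 (sph Rr th ph) y))) with (gl cg t); [exact HS|].
  rewrite Hy. rewrite dist_formula.
  rewrite <- (sqrt_sin th Hth), <- (sqrt_sin th' Hth'). fold a b.
  replace (a * b + sqrt (1 - a ^ 2) * sqrt (1 - b ^ 2) * cos (ph - ph')) with cg by (unfold cg, s; ring).
  assert (HD : 0 < 1 - 2 * cg * t + t^2) by (apply (D_pos cg Hcg); rewrite Rabs_right; lra).
  replace (Rr ^ 2 - 2 * Rr * r * cg + r ^ 2) with (Rr^2 * (1 - 2 * cg * t + t^2)) by (unfold t; field; lra).
  rewrite ln_sqrt' by (apply Rmult_lt_0_compat; [apply pow_lt|]; lra).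
  rewrite ln_mult by (try apply pow_lt; lra). rewrite ln_pow by lra.
  unfold gl. simpl INR. field.
Qed.
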